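(* Let ${\cal G}$ be a graph as described in the context and let $f$ be an edgewise linear function on ${\cal G}$. Then for every $p\ge 1$, $$\|f\|_{p,{\cal E}}\le \rho_{\sup}^{1/p}\,\|f\|_{p,{\cal V}}.$$
   Context: A graph ${\cal G}$ consists of an undirected graph $(V,E)$ (possibly infinite; multiple edges and self-loops allowed), a length $\ell_e>0$ for each edge $e$, a specified subset $\partial{\cal G}\subseteq V$ of boundary vertices, a vertex measure ${\cal V}$ (a measure supported on $V$ with ${\cal V}(v)>0$ for every $v$), and an edge measure ${\cal E}$ (zero on vertices, and on the interior of each edge $e$ equal to $a_e>0$ times Lebesgue measure). ${\cal G}$ is identified with its geometric realization (a closed interval of length $\ell_e$ attached between the endpoints of each edge $e$). A function is edgewise linear if it is continuous on ${\cal G}$ and linear on each edge interval. $\|f\|_{p,\mu}=(\int_{\cal G}|f|^p\,d\mu)^{1/p}$. The half-degree of $v$ is $\rho(v)={\cal V}(v)^{-1}\sum_{e\ni v}{\cal E}(e)/2$, and $\rho_{\sup}=\sup_{v\in V}\rho(v)$. *)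

(* Defs.v *)
From HB Require Import structures.
From mathcomp Require Import all_boot all_order all_algebra.
From mathcomp Require Import all_classical all_reals all_analysis.
Set Implicit Arguments. Unset Strict Implicit. Unset Printing Implicit Defensive.
Import Order.TTheory GRing.Theory Num.Theory.
Local Open Scope classical_set_scope.
Local Open Scope ring_scope.

(* A (metric, measured) graph: possibly infinite vertex and edge sets,
   multiple edges and self-loops allowed (an edge is just an element of
   [edge] with two endpoints [esrc], [etgt], possibly equal). *)
Record mgraph (R : realType) := MGraph {
  vert : choiceType;
  edge : choiceType;
  esrc : edge -> vert;
  etgt : edge -> vert;
  elen : edge -> R;
  elen_gt0 : forall e, 0 < elen e;
  bdry : set vert;
  vmeas : vert -> R;
  vmeas_gt0 : forall v, 0 < vmeas v;
  edens : edge -> R;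
  edens_gt0 : forall e, 0 < edens e
}.

Section defs.
Variable R : realType.
Variable G : mgraph R.

Definition emeas (e : edge G) : R := edens e * elen e.

(* edge-ends: (e,false) is the source end, (e,true) the target end;
   a self-loop at v contributes two ends at v *)
Definition eend (x : edge G * bool) : vert G :=
  if x.2 then etgt x.1 else esrc x.1.

Definition half_degree (v : vert G) : \bar R :=
  ((vmeas v)^-1)%:E *
  (\esum_(x in [set x | eend x = v]) ((emeas x.1 / 2)%:E))%E.

Definition rho_sup : \bar R := ereal_sup (range half_degree).

(* A function on the geometric realization: its values at the vertices
   [fv], and on each edge e its values [fe e t] at the point at distance
   t from the source end, t in [0, l_e]. *)
Record edgewise_linear := EdgewiseLinear {
  fv : vert G -> R;
  fe : edge G -> R -> R;
  fe_linear : forall e, exists a b : R,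
      forall t, t \in `[0, elen e] -> fe e t = a + b * t;
  (* continuity on the realization: edge values agree with vertex values
     at the endpoints *)
  fe_src : forall e, fe e 0 = fv (esrc e);
  fe_tgt : forall e, fe e (elen e) = fv (etgt e)
}.

Definition norm_E (p : R) (f : edgewise_linear) : \bar R :=
  poweR (\esum_(e in [set: edge G])
     ((edens e)%:E *
      \int[lebesgue_measure]_(t in `[0%R, elen e]%classic) ((`|fe f e t| `^ p)%:E))%E)
    p^-1.

Definition norm_V (p : R) (f : edgewise_linear) : \bar R :=
  poweR (\esum_(v in [set: vert G]) ((vmeas v * `|fv f v| `^ p)%:E)) p^-1.

End defs.

(* Main.v *)
Require Import Defs.
From HB Require Import structures.
From mathcomp Require Import all_boot all_order all_algebra.
From mathcomp Require Import all_classical all_reals all_analysis.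
From mathcomp Require Import ring lra measurable_realfun.
Import Order.TTheory GRing.Theory Num.Theory.
Local Open Scope ring_scope.
Local Open Scope classical_set_scope.

Lemma cvx_pow (R : realType) (p lam u v : R) : 1 <= p -> 0 <= lam -> lam <= 1 ->
  0 <= u -> 0 <= v ->
  (lam * u + (1 - lam) * v) `^ p <= lam * u `^ p + (1 - lam) * v `^ p.
Proof.
move=> p1 l0 l1 u0 v0.
by apply: (convex_powR p1 (Itv01 _ _)) => //=; rewrite ?inE/= ?in_itv/= ?u0 ?v0 ?andbT ?l0.
Qed.
Lemma int_affine (R : realType) (l A B : R) : 0 < l ->
  (\int[@lebesgue_measure R]_(t in `[0%R, l]) ((1 - t / l) * A + t / l * B)%:E
   = (l * (A + B) / 2)%:E)%E.
Proof.
move=> l0.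
pose F := fun t : R => A * t + (B - A) / (2 * l) * (t * t).
have dF : forall x : R, is_derive x (1:R) F ((1 - x / l) * A + x / l * B).
  move=> x; rewrite /F; apply: is_derive_eq.
  rewrite /=. change (A * 1 + ((B-A)/(2 * l)) * (x*1 + x*1) = (1 - x / l) * A + x / l * B).
  by field; rewrite gt_eqF.
rewrite (@continuous_FTC2 _ _ F) //.
- rewrite /F; congr (_%:E); field; rewrite gt_eqF //.
- apply: derivable_within_continuous => x _.
  apply: ex_derive.
- split.
  + by move=> x _; by case: (dF x).
  + apply: cvg_at_right_filter; apply: differentiable_continuous; rewrite -derivable1_diffP; by case: (dF 0).
  + apply: cvg_at_left_filter; apply: differentiable_continuous; rewrite -derivable1_diffP; by case: (dF l).
- move=> x _; rewrite derive1E; by case: (dF x).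
Qed.

Lemma edge_bound (R : realType) (G : mgraph R) (f : edgewise_linear G) (p : R)
  (hp : 1 <= p) (e : edge G) :
  ((edens e)%:E * \int[lebesgue_measure]_(t in `[0%R, elen e]) ((`|fe f e t| `^ p)%:E) <=
  (emeas e / 2 * `|fv f (esrc e)| `^ p + emeas e / 2 * `|fv f (etgt e)| `^ p)%:E)%E.
Proof.
have [a [b Hab]] := fe_linear f e.
have l0 := elen_gt0 e.
set l := elen e in l0 Hab *.
have Hs : fv f (esrc e) = a.
  by rewrite -fe_src Hab ?mulr0 ?addr0 // in_itv /= lexx ltW.
have Ht : fv f (etgt e) = a + b * l.
  by rewrite -fe_tgt Hab // in_itv /= lexx ltW.
rewrite Hs Ht.
set A := `|a| `^ p. set B := `|a + b * l| `^ p.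
have -> : (\int[lebesgue_measure]_(t in `[0%R, l]) ((`|fe f e t| `^ p)%:E) =
          \int[lebesgue_measure]_(t in `[0%R, l]) ((`|a + b * t| `^ p)%:E))%E.
  apply: eq_integral => t; rewrite inE /= => tD.
  by rewrite Hab.
apply: (@le_trans _ _ ((edens e)%:E * (l * (A + B) / 2)%:E)%E); last first.
  rewrite -EFinM lee_fin /emeas -/l.
  by rewrite [X in X <= _](_ : _ = edens e * l / 2 * A + edens e * l / 2 * B) //; ring.
apply: lee_wpmul2l; first by rewrite lee_fin ltW // edens_gt0.
apply: (@le_trans _ _ (\int[lebesgue_measure]_(t in `[0%R, l]) ((1 - t / l) * A + t / l * B)%:E)%E); last by rewrite int_affine.
apply: (ge0_le_integral).
- exact: measurable_itv.
- by move=> t _; rewrite -[0%E]/(0%:E) lee_fin powR_ge0.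
- apply: measurableT_comp => //.
  apply: (measurableT_comp (measurable_powR p)).
  apply: (measurableT_comp (@normr_measurable R setT)).
  by apply: measurable_funD => //.
- apply: measurableT_comp => //.
  apply: measurable_funD; apply: measurable_funM => //; try apply: measurable_funB => //; try apply: measurable_funM => //.
- move=> t; rewrite /= in_itv /= => /andP[t0 tl].
  rewrite lee_fin.
  have lam0 : 0 <= 1 - t / l by rewrite subr_ge0 ler_pdivrMr // mul1r.
  have lam1 : 1 - t / l <= 1 by rewrite gerBl divr_ge0 // ltW.
  have e1 : 1 - (1 - t / l) = t / l by ring.
  have key := @cvx_pow R p _ _ _ hp lam0 lam1 (normr_ge0 a) (normr_ge0 (a + b * l)).
  rewrite e1 in key.
  apply: le_trans key.
  apply: ge0_ler_powR; first by lra.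
  + by rewrite nnegrE.
  + by rewrite nnegrE; apply: addr_ge0; apply: mulr_ge0 => //; rewrite divr_ge0 // ltW.
  have -> : a + b * t = (1 - t / l) * a + t / l * (a + b * l).
    by field; rewrite gt_eqF.
  apply: le_trans (ler_normD _ _) _.
  have tl0 : 0 <= t / l by rewrite divr_ge0 // ltW.
  have il0 : 0 <= l^-1 by rewrite invr_ge0 ltW.
  by rewrite !normrM (ger0_norm lam0) (ger0_norm t0) (ger0_norm il0).

Qed.
Lemma esum_mul_le (R : realType) (T : choiceType) (I : set T) (k : \bar R)
  (a : T -> \bar R) : (0 <= k)%E -> (forall i, 0 <= a i)%E ->
  (\esum_(i in I) (k * a i) <= k * \esum_(i in I) a i)%E.
Proof.
move=> k0 a0.
apply: ge_ereal_sup => _ [X XI <-].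
rewrite -ge0_mule_fsumr //.
apply: lee_wpmul2l => //.
by apply: ereal_sup_ubound; exists X.
Qed.

Lemma regroup (R : realType) (G : mgraph R) (g : edge G * bool -> \bar R) :
  (forall x, 0 <= g x)%E ->
  \esum_(x in [set: edge G * bool]) g x =
  \esum_(v in [set: vert G]) \esum_(x in [set x | eend x = v]) g x.
Proof.
move=> g0.
rewrite (@esum_esum _ _ _ [set: vert G] (fun v => [set x | eend x = v]) (fun v x => g x)) //.
rewrite (reindex_esum [set: edge G * bool] _ (fun x => (eend x, x))) //.
split.
- by move=> x _ /=.
- by move=> x y _ _ [].
- by move=> [v x] [_ /= <-]; exists x.
Qed.

Lemma split_ends (R : realType) (G : mgraph R) (g : edge G * bool -> \bar R) :
  (forall x, 0 <= g x)%E ->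
  \esum_(x in [set: edge G * bool]) g x =
  (\esum_(e in [set: edge G]) g (e, false) + \esum_(e in [set: edge G]) g (e, true))%E.
Proof.
move=> g0.
rewrite (esumID [set x | x.2 = true]) //.
rewrite addeC.
congr (_ + _)%E.
- rewrite (reindex_esum [set: edge G] _ (fun e => (e, false))) //.
  split.
  + by move=> e _ /=; split.
  + by move=> x y _ _ [].
  + by move=> [e b] [_ /=]; case: b => // _; exists e.
- rewrite (reindex_esum [set: edge G] _ (fun e => (e, true))) //.
  split.
  + by move=> e _ /=; split.
  + by move=> x y _ _ [].
  + by move=> [e b] [_ /=] ->; exists e.
Qed.

Theorem mainTheorem2 (R : realType) (G : mgraph R) (f : edgewise_linear G)
  (p : R) (hp : 1 <= p) :
  (norm_E p f <= poweR (rho_sup G) p^-1 * norm_V p f)%E.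
Proof.
have p0 : 0 < p by apply: lt_le_trans hp.
have ip0 : p^-1 != 0 by rewrite invr_eq0 gt_eqF.
rewrite /norm_E /norm_V.
set SE := esum _ _.
set SV := esum _ _.
set P := fun v : vert G => `|fv f v| `^ p.
have SE0 : (0 <= SE)%E.
  apply: esum_ge0 => e _; apply: mule_ge0; first by rewrite lee_fin ltW // edens_gt0.
  by apply: integral_ge0 => t _; rewrite lee_fin powR_ge0.
have SV0 : (0 <= SV)%E.
  by apply: esum_ge0 => v _; rewrite lee_fin mulr_ge0 // ?powR_ge0 // ltW // vmeas_gt0.
have [[v0 _]|nov] := pselect (exists v : vert G, True); last first.
  have -> : SE = 0%E.
    by apply: esum1 => e _; exfalso; apply: nov; exists (esrc e).
  have -> : SV = 0%E.
    by apply: esum1 => v _; exfalso; apply: nov; exists v.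
  by rewrite poweR0r // mule0.
have hd0 : forall v : vert G, (0 <= half_degree v)%E.
  move=> v; rewrite /half_degree; apply: mule_ge0; first by rewrite lee_fin invr_ge0 ltW // vmeas_gt0.
  by apply: esum_ge0 => x _; rewrite lee_fin divr_ge0 // mulr_ge0 // ltW ?edens_gt0 ?elen_gt0.
have hdle : forall v : vert G, (half_degree v <= rho_sup G)%E.
  by move=> v; apply: ereal_sup_ubound; exists v.
have rho0 : (0 <= rho_sup G)%E by apply: le_trans (hd0 v0) (hdle v0).
have Pge0 : forall v, 0 <= P v by move=> v; apply: powR_ge0.
have cge0 : forall e : edge G, 0 <= emeas e / 2.
  by move=> e; rewrite divr_ge0 // mulr_ge0 // ltW ?edens_gt0 ?elen_gt0.
pose g := fun x : edge G * bool => ((emeas x.1 / 2) * P (eend x))%:E.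
have gg : forall x, (0 <= g x)%E by move=> x; rewrite lee_fin mulr_ge0.
have key : (SE <= rho_sup G * SV)%E.
  apply: (@le_trans _ _ (\esum_(e in [set: edge G]) (((emeas e / 2) * P (esrc e))%:E + ((emeas e / 2) * P (etgt e))%:E))%E).
    apply: le_esum => e _; rewrite -EFinD; exact: edge_bound.
  rewrite esumD; last 2 first.
  - by move=> e _; rewrite lee_fin mulr_ge0.
  - by move=> e _; rewrite lee_fin mulr_ge0.
  apply: (@le_trans _ _ (\esum_(x in [set: edge G * bool]) g x)%E).
    by rewrite split_ends //; exact: lexx.
  rewrite regroup //.
  rewrite /SV.
  apply: (le_trans _ (@esum_mul_le R _ [set: vert G] _ (fun v => (vmeas v * P v)%:E) rho0 _)); last first.
    by move=> v; rewrite lee_fin mulr_ge0 // ltW // vmeas_gt0.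
  apply: le_esum => v _.
  rewrite (eq_esum (b := fun x => (P v)%:E * (emeas x.1 / 2)%:E)%E); last first.
    by move=> x /= Hx; rewrite /g Hx -EFinM mulrC.
  apply: le_trans (@esum_mul_le R _ _ (P v)%:E (fun x : edge G * bool => (emeas x.1 / 2)%:E) _ _) _.
  - by rewrite lee_fin.
  - by move=> x; rewrite lee_fin.
  have hv : (\esum_(x in [set x | eend x = v]) (emeas x.1 / 2)%:E = (vmeas v)%:E * half_degree v)%E.
    by rewrite /half_degree muleA -EFinM mulfV ?gt_eqF ?vmeas_gt0 // mul1e.
  rewrite hv.
  apply: (@le_trans _ _ ((P v)%:E * ((vmeas v)%:E * rho_sup G))%E).
    apply: lee_wpmul2l; first by rewrite lee_fin.
    apply: lee_wpmul2l; first by rewrite lee_fin ltW // vmeas_gt0.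
    exact: hdle.
  by rewrite muleA muleC -EFinM mulrC.
apply: le_trans (gt0_ler_poweR _ _ _ key) _.
- by rewrite invr_ge0 ltW.
- by rewrite in_itv /= SE0 leey.
- by rewrite in_itv /= mule_ge0 // leey.
by rewrite poweRM.
Qed.
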